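(* Let $X$ be a shift space and $m\ge1$. The following are equivalent: (i) $X$ is eventually dendric with threshold $m$; (ii) the graph $\mathcal E_n(w)$ is a tree for every $n\ge1$ and every $w\in\mathcal L_{\ge m}(X)$; (iii) there is an integer $n\ge1$ such that $\mathcal E_n(w)$ is a tree for every $w\in\mathcal L_{\ge m}(X)$.
   Context: $A$ is a finite alphabet; a shift space is a closed shift-invariant subset $X\subseteq A^{\mathbb Z}$; $\mathcal L(X)$ is its set of finite factors, $\mathcal L_n(X)=\mathcal L(X)\cap A^n$, $\mathcal L_{\ge n}(X)=\bigcup_{k\ge n}\mathcal L_k(X)$. For $w\in\mathcal L(X)$ and $n\ge1$: $L_n(w)=\{u\in\mathcal L_n(X):uw\in\mathcal L(X)\}$, $R_n(w)=\{v\in\mathcal L_n(X):wv\in\mathcal L(X)\}$, and the extension graph $\mathcal E_n(w)$ is the undirected bipartite graph with vertex set the disjoint union of $L_n(w)$ and $R_n(w)$ and an edge $(u,v)$ iff $uwv\in\mathcal L(X)$. $X$ is eventually dendric with threshold $m$ if $\mathcal E_1(w)$ is a tree for every $w\in\mathcal L_{\ge m}(X)$. *)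

(* Defs.v *)
From HB Require Import structures.
From mathcomp Require Import all_boot all_order all_algebra.
Set Implicit Arguments. Unset Strict Implicit. Unset Printing Implicit Defensive.
Import Order.TTheory GRing.Theory Num.Theory.

Definition config (A : finType) := int -> A.

Definition shift (A : finType) (x : config A) : config A := fun i => x (i + 1)%R.

(* closedness in the product topology: x is in X whenever every central
   cylinder [x_{-k} .. x_k] around x meets X *)
Definition closed_set (A : finType) (X : config A -> Prop) : Prop :=
  forall x : config A,
    (forall k : nat, exists y, X y /\
        forall i : int, (- (k%:Z) <= i)%R -> (i <= k%:Z)%R -> y i = x i) ->
    X x.

(* shift invariance: sigma(X) = X (sigma is a bijection) *)
Definition shift_invariant (A : finType) (X : config A -> Prop) : Prop :=
  forall x, X x <-> X (shift x).

Definition shift_space (A : finType) (X : config A -> Prop) : Prop :=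
  closed_set X /\ shift_invariant X.

Definition window (A : finType) (x : config A) (i : int) (n : nat) : seq A :=
  mkseq (fun k => x (i + k%:Z)%R) n.

Definition lang (A : finType) (X : config A -> Prop) (w : seq A) : Prop :=
  exists x i, X x /\ w = window x i (size w).

Definition lang_ge (A : finType) (X : config A -> Prop) (m : nat) (w : seq A) : Prop :=
  lang X w /\ m <= size w.

Definition Lext (A : finType) (X : config A -> Prop) (n : nat) (w u : seq A) : Prop :=
  size u = n /\ lang X u /\ lang X (u ++ w).
Definition Rext (A : finType) (X : config A -> Prop) (n : nat) (w v : seq A) : Prop :=
  size v = n /\ lang X v /\ lang X (w ++ v).

(* Undirected graphs given by a vertex predicate S and a symmetric edge
   relation E on a type V. *)
Record graph (V : Type) := Graph { vert : V -> Prop; edge : V -> V -> Prop }.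

Fixpoint walk (V : Type) (E : V -> V -> Prop) (x : V) (p : seq V) : Prop :=
  match p with
  | [::] => True
  | y :: p' => E x y /\ walk E y p'
  end.

Definition connected (V : eqType) (G : graph V) : Prop :=
  forall x y, vert G x -> vert G y ->
    exists p, (forall z, z \in p -> vert G z) /\ walk (edge G) x p /\ last x p = y.

Definition acyclic (V : eqType) (G : graph V) : Prop :=
  forall (c0 : V) (c' : seq V), uniq (c0 :: c') -> 2 <= size c' ->
    (forall z, z \in c0 :: c' -> vert G z) ->
    ~ walk (edge G) c0 (rcons c' c0).

Definition is_tree (V : eqType) (G : graph V) : Prop :=
  (exists x, vert G x) /\ connected G /\ acyclic G.

(* Extension graph E_n(w): vertices inl u (u in L_n(w)) and inr v
   (v in R_n(w)); an (undirected) edge between inl u and inr v iff uwv in L(X). *)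
Definition ext_graph (A : finType) (X : config A -> Prop) (n : nat) (w : seq A)
  : graph (seq A + seq A)%type :=
  Graph (fun z => match z with inl u => Lext X n w u | inr v => Rext X n w v end)
        (fun z1 z2 => match z1, z2 with
           | inl u, inr v | inr v, inl u =>
               Lext X n w u /\ Rext X n w v /\ lang X (u ++ w ++ v)
           | _, _ => False end).

Definition eventually_dendric (A : finType) (X : config A -> Prop) (m : nat) : Prop :=
  forall w, lang_ge X m w -> is_tree (ext_graph X 1 w).

(* Main.v *)
Require Import Defs.
From mathcomp Require Import all_boot all_order all_algebra.
From Stdlib Require Import Relations Classical.
Set Implicit Arguments. Unset Strict Implicit. Unset Printing Implicit Defensive.

Section Reach.
Variable V : Type.
Implicit Types G : graph V.

Definition adj G a b := vert G a /\ vert G b /\ edge G a b.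
Definition reach G := clos_refl_trans V (adj G).
Definition rm_edge G x y :=
  Graph (vert G) (fun a b => edge G a b /\ ~ (a = x /\ b = y) /\ ~ (a = y /\ b = x)).
Definition restrict G (P : V -> Prop) := Graph (fun z => vert G z /\ P z) (edge G).
Definition conn G := forall x y, vert G x -> vert G y -> reach G x y.
Definition bridgey G := forall x y, vert G x -> vert G y -> edge G x y ->
  ~ reach (rm_edge G x y) x y.
Definition tree' G := (exists x, vert G x) /\ conn G /\ bridgey G.

Lemma reach_refl G x : reach G x x.
Proof. exact: rt_refl. Qed.
Lemma reach_step G x y : vert G x -> vert G y -> edge G x y -> reach G x y.
Proof. by move=> *; apply: rt_step. Qed.
Lemma reach_trans G x y z : reach G x y -> reach G y z -> reach G x z.
Proof. exact: rt_trans. Qed.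

Lemma reach_closed G (S : V -> Prop) :
  (forall a b, S a -> vert G a -> vert G b -> edge G a b -> S b) ->
  forall x y, S x -> reach G x y -> S y.
Proof.
move=> HS x y Sx H; move: H Sx; elim=> //.
- by move=> a b [? [? ?]] Sa; apply: (HS a).
- by move=> a b c _ IH1 _ IH2 Sa; apply: IH2; apply: IH1.
Qed.

Lemma reach_vert G x y : reach G x y -> x = y \/ vert G y.
Proof.
move=> H; apply: (reach_closed (S := fun z => x = z \/ vert G z)) H; last by left.
by move=> a b _ _ ? _; right.
Qed.

Lemma reach_sym G : (forall a b, edge G a b -> edge G b a) ->
  forall x y, reach G x y -> reach G y x.
Proof.
move=> Hs x y; elim.
- by move=> a b [? [? ?]]; apply: reach_step => //; apply: Hs.
- by move=> ?; apply: reach_refl.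
- by move=> a b c _ ? _ ?; apply: reach_trans; eauto.
Qed.

Lemma last_step G p q : reach G p q -> p <> q ->
  exists z, vert G z /\ vert G q /\ edge G z q /\
    reach (restrict G (fun v => v <> q)) p z.
Proof.
move=> Hr Hpq.
case: (classic (exists z, vert G z /\ vert G q /\ edge G z q /\
    reach (restrict G (fun v => v <> q)) p z)) => // Hn; exfalso.
have : reach (restrict G (fun v => v <> q)) p q.
  apply: (reach_closed (S := fun z => reach (restrict G (fun v => v <> q)) p z)) Hr;
    last exact: reach_refl.
  move=> a b Sa Va Vb Eab.
  case: (classic (b = q)) => [Ebq|Nbq].
    by subst b; case: Hn; exists a.
  have Na : a <> q by case: (reach_vert Sa) => [<-|[]].
  by apply: reach_trans Sa _; apply: reach_step => //=; split.
by case/reach_vert => [//|[_ []]].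
Qed.

End Reach.

Lemma reach_hom V V' (G : graph V) (G' : graph V') (h : V -> V') :
  (forall a b, vert G a -> vert G b -> edge G a b ->
     vert G' (h a) /\ vert G' (h b) /\ edge G' (h a) (h b)) ->
  forall x y, reach G x y -> reach G' (h x) (h y).
Proof.
move=> Hh x y; elim.
- by move=> a b [? [? ?]]; case: (Hh a b) => // ? [? ?]; apply: reach_step.
- by move=> ?; apply: reach_refl.
- by move=> a b c _ ? _ ?; apply: reach_trans; eauto.
Qed.

Lemma reach_mono V (G G' : graph V) :
  (forall a b, vert G a -> vert G b -> edge G a b ->
     vert G' a /\ vert G' b /\ edge G' a b) ->
  forall x y, reach G x y -> reach G' x y.
Proof. by move=> H x y; apply: (reach_hom (h := id)). Qed.

Lemma iso_transfer V V' (G : graph V) (G' : graph V') (f : V -> V') (g : V' -> V) :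
  (forall x, vert G x -> vert G' (f x)) -> (forall y, vert G' y -> vert G (g y)) ->
  (forall y, vert G' y -> f (g y) = y) ->
  (forall x y, vert G x -> vert G y -> edge G x y -> edge G' (f x) (f y)) ->
  (forall x y, vert G' x -> vert G' y -> edge G' x y -> edge G (g x) (g y)) ->
  (conn G -> conn G') /\ (bridgey G -> bridgey G') /\
  ((exists x, vert G x) -> exists y, vert G' y).
Proof.
move=> fV gV fg fE gE; split; [|split].
- move=> C x y Vx Vy; rewrite -(fg x Vx) -(fg y Vy).
  apply: (reach_hom (h := f)); last by apply: C; apply: gV.
  by move=> a b Va Vb Eab; split; [apply: fV|split; [apply: fV|apply: fE]].
- move=> B x y Vx Vy Exy Hr.
  apply: (B (g x) (g y) (gV _ Vx) (gV _ Vy) (gE _ _ Vx Vy Exy)).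
  apply: (reach_hom (h := g)) Hr => a b /= Va Vb [Eab [N1 N2]].
  split; first exact: gV. split; first exact: gV.
  split; first exact: gE.
  split=> -[E1 E2]; [apply: N1|apply: N2].
  + by rewrite -(fg a Va) -(fg b Vb) E1 E2 !fg.
  + by rewrite -(fg a Va) -(fg b Vb) E1 E2 !fg.
- by case=> x Vx; exists (f x); apply: fV.
Qed.

Section Walks.
Variable V : eqType.
Implicit Types G : graph V.

Lemma walk_cat (E : V -> V -> Prop) x s t :
  walk E x (s ++ t) <-> walk E x s /\ walk E (last x s) t.
Proof.
elim: s x => [|y s IH] x /=; first by split=> // -[].
rewrite IH; tauto.
Qed.

Lemma walk_rcons (E : V -> V -> Prop) x s z :
  walk E x (rcons s z) <-> walk E x s /\ E (last x s) z.
Proof. by rewrite -cats1 walk_cat /=; tauto. Qed.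

Lemma walk_mono (E E' : V -> V -> Prop) x p :
  (forall a b, E a b -> E' a b) -> walk E x p -> walk E' x p.
Proof. by move=> H; elim: p x => [|y p IH] x //= [/H ? /IH ?]. Qed.

Lemma W2R G x p : vert G x -> (forall z, z \in p -> vert G z) ->
  walk (edge G) x p -> reach G x (last x p).
Proof.
elim: p x => [|y p IH] x Vx Vp /=; first by move=> _; apply: reach_refl.
case=> Exy Hw; apply: reach_trans (reach_step Vx _ Exy) _.
  by apply: Vp; rewrite inE eqxx.
apply: IH => //; first by apply: Vp; rewrite inE eqxx.
by move=> z Hz; apply: Vp; rewrite inE Hz orbT.
Qed.

Lemma R2Wu G x y : (forall a, ~ edge G a a) -> reach G x y ->
  exists p, uniq (x :: p) /\ (forall z, z \in p -> vert G z) /\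
    walk (edge G) x p /\ last x p = y.
Proof.
move=> Hirr /clos_rt_rt1n_iff H; elim: H => [a|a b c [Va [Vb Eab]] _ [p [Hu [Hv [Hw Hl]]]]].
  by exists [::].
case: (boolP (a \in b :: p)) => Hin.
  have Hap : a \in p.
    move: Hin; rewrite inE => /orP [/eqP Eab'|//].
    by subst b; case: (Hirr a).
  case/splitPr: Hap Hu Hv Hw Hl => r q Hu Hv Hw Hl.
  exists q; split.
    move: Hu; rewrite /= cat_uniq => /andP [_ /and3P [_ _]].
    by rewrite /=.
  split; first by move=> z Hz; apply: Hv; rewrite mem_cat inE Hz !orbT.
  move/walk_cat: Hw => [_ /= [_ Hw]]; split=> //.
  by rewrite -Hl last_cat.
exists (b :: p); split; first by rewrite cons_uniq Hin Hu.
split; first by move=> z; rewrite inE => /orP [/eqP ->|/Hv].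
by split.
Qed.

Lemma tree_equiv G : (forall a b, edge G a b -> edge G b a) ->
  (forall a, ~ edge G a a) -> is_tree G <-> tree' G.
Proof.
move=> Hsym Hirr.
have Cq : connected G <-> conn G.
  split.
  - move=> C x y Vx Vy; case: (C x y Vx Vy) => p [Hv [Hw <-]].
    exact: W2R.
  - move=> C x y Vx Vy; case: (R2Wu Hirr (C x y Vx Vy)) => p [_ [Hv [Hw Hl]]].
    by exists p.
have Aq : acyclic G <-> bridgey G.
  split.
  - move=> Ac x y Vx Vy Exy Hr.
    have Hirr' : forall a, ~ edge (rm_edge G x y) a a by move=> a [/Hirr].
    case: (R2Wu Hirr' Hr) => p [Hu [Hv [Hw Hl]]].
    case: p Hu Hv Hw Hl => [|z1 [|z2 p]] Hu Hv Hw Hl.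
    + by rewrite /= in Hl; subst y; apply: (Hirr x).
    + by rewrite /= in Hl; subst z1; case: Hw => [[_ [[]]]].
    + apply: (Ac x [:: z1, z2 & p] Hu) => //.
        by move=> z; rewrite inE => /orP [/eqP ->|/Hv].
      apply/walk_rcons; split; last by rewrite Hl; apply: Hsym.
      by apply: walk_mono Hw => a b [].
  - move=> B c0 c' Hu Hs Hv Hw.
    case: c' Hu Hs Hv Hw => [|c1 c''] // Hu Hs Hv /= [E01 Hw].
    move/walk_rcons: Hw => [Hw Hl].
    case: c'' Hu Hs Hv Hw Hl => [|z t] // Hu _ Hv Hw Hl.
    set y := last c1 (z :: t) in Hl.
    have Hy : y \in z :: t by rewrite /y /= mem_last.
    move: Hu; rewrite cons_uniq => /andP [N0 Hu].
    move: Hu; rewrite cons_uniq => /andP [N1 Hu].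
    have N01 : c1 <> c0 by move=> E; move: N0; rewrite E inE eqxx.
    have Ny0 : y <> c0 by move=> E; move: N0; rewrite -E inE Hy orbT.
    have Ny1 : y <> c1 by move=> E; move: N1; rewrite -E Hy.
    have V0 : vert G c0 by apply: Hv; rewrite inE eqxx.
    have V1 : vert G c1 by apply: Hv; rewrite !inE eqxx orbT.
    have Vy : vert G y by apply: Hv; rewrite in_cons [y \in c1 :: _]in_cons Hy !orbT.
    have R1 : reach (restrict G (fun v => v <> c0)) c1 y.
      apply: W2R => //=.
      move=> w Hw'; split; first by apply: Hv; rewrite in_cons [w \in c1 :: _]in_cons Hw' !orbT.
      by move=> E; move: N0; rewrite -E inE Hw' orbT.
    have R2 : reach (rm_edge G c0 c1) c1 c0.
      apply: reach_trans (_ : reach _ y _); last first.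
        apply: reach_step => //.
        split; [exact: Hl|split=> -[H _]; [exact: Ny0 H|exact: Ny1 H]].
      apply: reach_mono R1 => a b [Va Na] [Vb Nb] Eab.
      split=> //; split=> //; split; first exact: Eab.
      by split=> -[? ?]; [exact: Na|exact: Nb].
    apply: (B c0 c1 V0 V1 E01).
    apply: reach_sym R2 => a b [Eab [N1' N2']]; split; first exact: Hsym.
    by split=> -[? ?]; [apply: N2'|apply: N1'].
rewrite /is_tree /tree' Cq Aq; tauto.
Qed.

End Walks.

Definition mkG U T (L : U -> Prop) (R : T -> Prop) (e : U -> T -> Prop) : graph (U + T) :=
  Graph (fun z => match z with inl u => L u | inr v => R v end)
        (fun z1 z2 => match z1, z2 with
           | inl u, inr v => e u v | inr v, inl u => e u v | _, _ => False end).

Lemma mkG_sym U T L R e a b : edge (@mkG U T L R e) a b -> edge (mkG L R e) b a.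
Proof. by case: a b => [a|a] [b|b]. Qed.

Lemma mkG_irr U T L R e a : ~ edge (@mkG U T L R e) a a.
Proof. by case: a => a H; case: H. Qed.

Lemma rm_sym V (G : graph V) x y : (forall a b, edge G a b -> edge G b a) ->
  forall a b, edge (rm_edge G x y) a b -> edge (rm_edge G x y) b a.
Proof.
move=> Hs a b [Eab [N1 N2]]; split; first exact: Hs.
by split=> -[? ?]; [apply: N2|apply: N1].
Qed.

Lemma bridgey_half U T L R e :
  (forall a t, e a t -> ~ reach (rm_edge (@mkG U T L R e) (inl a) (inr t)) (inl a) (inr t)) ->
  bridgey (mkG L R e).
Proof.
move=> H [a|t] [b|t'] //= Va Vb Eab; first exact: H.
move=> Hr; apply: (H b t Eab).
have Hr' := reach_sym (rm_sym (x := inr t) (y := inl b) (@mkG_sym U T L R e)) Hr.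
apply: reach_mono Hr' => x y Vx Vy [Exy [N1 N2]].
by split=> //; split=> //; split=> //.
Qed.

Ltac finneg := first [ done | move=> [E1 E2]; (try discriminate);
  match goal with H : _ <> _ |- _ => by apply: H; (try congruence) end ].

Section Fiber.
Variables (U T T' : Type) (L : U -> Prop) (R : T -> Prop) (e : U -> T -> Prop)
  (R' : T' -> Prop) (e' : U -> T' -> Prop) (pi : T' -> T).
Hypotheses (hLR : forall u t, e u t -> L u /\ R t)
 (hLR' : forall u s, e' u s -> L u /\ R' s)
 (hpe : forall u s, e' u s -> e u (pi s))
 (hpR : forall s, R' s -> R (pi s))
 (hlift : forall u t, e u t -> exists s, pi s = t /\ e' u s)
 (hR'e : forall s, R' s -> exists u, e' u s)
 (hRe : forall t, R t -> exists u, e u t).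

Local Notation G := (mkG L R e).
Local Notation G' := (mkG L R' e').
Definition Hf r := mkG (fun u => e u r) (fun s => R' s /\ pi s = r) e'.

Definition PL (P : T -> Prop) (z : U + T) := match z with inl _ => True | inr t => P t end.
Definition PL' (P : T -> Prop) (z : U + T') := match z with inl _ => True | inr s => P (pi s) end.

Lemma lift (P : T -> Prop) (HC : forall t, R t -> conn (Hf t)) a : L a ->
  forall z, reach (restrict G (PL P)) (inl a) z ->
  match z with
  | inl u => reach (restrict G' (PL' P)) (inl a) (inl u)
  | inr t => forall s, R' s -> pi s = t -> reach (restrict G' (PL' P)) (inl a) (inr s)
  end.
Proof.
move=> La z; apply: (reach_closed (S := fun z => match z with
  | inl u => reach (restrict G' (PL' P)) (inl a) (inl u)
  | inr t => forall s, R' s -> pi s = t -> reach (restrict G' (PL' P)) (inl a) (inr s)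
  end)); last exact: reach_refl.
move=> [x|t] [x'|t'] //= Sa [Va Pa] [Vb Pb] Eab.
- move=> s Rs Hps; apply: reach_trans Sa _.
  have Hc := HC t' Vb (inl x) (inr s) Eab (conj Rs Hps).
  apply: reach_mono Hc => [[u|s1] [u'|s2]] //=.
  + move=> Hu [Rs2 Hs2] Ee; split; first by split=> //; case: (hLR' Ee).
    by split=> //; split=> //; rewrite Hs2.
  + move=> [Rs1 Hs1] Hu Ee; split; first by split=> //; rewrite Hs1.
    by split=> //; split=> //; case: (hLR' Ee).
- case: (hlift Eab) => s [Hps Es].
  apply: reach_trans (Sa s (hLR' Es).2 Hps) _.
  apply: reach_step => //=; split=> //; first by case: (hLR' Es).
  by rewrite Hps.
Qed.

Lemma A_conn : conn G -> (forall t, R t -> conn (Hf t)) -> conn G'.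
Proof.
move=> C HC.
have Hl : forall u u', L u -> L u' -> reach G' (inl u) (inl u').
  move=> u u' Lu Lu'.
  have H1 : reach (restrict G (PL (fun _ => True))) (inl u) (inl u').
    by apply: reach_mono (C (inl u) (inl u') Lu Lu') => [[x|t] [x'|t']] //= Vx Vy Exy; repeat split.
  have := lift HC Lu H1 => /= H2.
  by apply: reach_mono H2 => x y [Vx _] [Vy _] Exy.
have Hv : forall x, vert G' x -> exists u, L u /\ reach G' x (inl u) /\ reach G' (inl u) x.
  move=> [u|s] /= Vx; first by exists u; split=> //; split; apply: reach_refl.
  case: (hR'e Vx) => u Eu; exists u; split; first by case: (hLR' Eu).
  by split; apply: reach_step => //=; case: (hLR' Eu).
move=> x y Vx Vy.
case: (Hv x Vx) => u [Lu [Hxu _]]; case: (Hv y Vy) => u' [Lu' [_ Huy]].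
by apply: reach_trans Hxu (reach_trans (Hl u u' Lu Lu') Huy).
Qed.


Lemma A_bridge : bridgey G -> (forall r, R r -> bridgey (Hf r)) -> bridgey G'.
Proof.
move=> BG BH; apply: bridgey_half => a s Eas Hr.
set r := pi s.
have Ear : e a r := hpe Eas.
have Rs : R' s := (hLR' Eas).2.
have Rr : R r := hpR Rs.
pose K b z := reach (restrict G (fun z => z <> inr r)) (inl b) z.
pose D z := reach (rm_edge (Hf r) (inl a) (inr s)) (inl a) z.
have key : forall b x, D (inl b) -> K b (inl x) -> e x r -> x = b.
  move=> b x Db Kbx Exr.
  have Ebr : e b r.
    case: (reach_vert Db) => [[<-]|//].
    exact: Ear.
  case: (classic (x = b)) => // Nxb; exfalso.
  apply: (BG (inl b) (inr r) (hLR Ebr).1 Rr Ebr).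
  apply: reach_trans (_ : reach _ _ (inl x)) _.
    apply: reach_mono Kbx => [[u|t] [u'|t']] //= [Vu Nu] [Vu' Nu'] Ee;
      repeat split => //; finneg.
  apply: reach_step => //=; first by case: (hLR Exr).
  repeat split => //; finneg.
have : (fun z => match z with
   | inl x => exists b, D (inl b) /\ K b (inl x)
   | inr s' => (pi s' <> r /\ exists b, D (inl b) /\ K b (inr (pi s'))) \/
               (pi s' = r /\ D (inr s')) end) (inr s).
  apply: (reach_closed (S := fun z => match z with
   | inl x => exists b, D (inl b) /\ K b (inl x)
   | inr s' => (pi s' <> r /\ exists b, D (inl b) /\ K b (inr (pi s'))) \/
               (pi s' = r /\ D (inr s')) end)) Hr; last first.
    by exists a; split; apply: reach_refl.
  move=> [x|s1] [x'|s2] Sa Va Vb [Ee [N1 N2]]; try by case: Ee.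
  - case: Sa => b [Db Kbx].
    case: (classic (pi s2 = r)) => Hp.
      have Exr : e x r by rewrite -Hp; apply: hpe.
      have Exb := key b x Db Kbx Exr; subst b.
      right; split=> //; apply: reach_trans Db _.
      by apply: reach_step => //=; split.
    left; split=> //; exists b; split=> //.
    apply: reach_trans Kbx _; apply: reach_step => //=;
      first [by split; [apply: hpR|move=> [/Hp]] | exact: hpe | by split].
  - case: Sa => [[Hp [b [Db Kb]]]|[Hp Ds]].
      exists b; split=> //; apply: reach_trans Kb _; apply: reach_step => //=;
        first [by split; [apply: hpR|move=> [/Hp]] | exact: hpe | by split].
    exists x'; split; last exact: reach_refl.
    apply: reach_trans Ds _; apply: reach_step => //=.
    by rewrite -Hp; apply: hpe.
move=> /= [[//]|[_ Ds]].
by apply: (BH r Rr (inl a) (inr s) Ear (conj Rs erefl) Eas).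
Qed.

Lemma B_conn : conn G' -> conn G.
Proof.
move=> C.
have Hl : forall u u', L u -> L u' -> reach G (inl u) (inl u').
  move=> u u' Lu Lu'.
  apply: (reach_hom (G' := G) (h := fun z => match z with inl u => inl u | inr s => inr (pi s) end) _
    (C (inl u) (inl u') Lu Lu')) => -[x|s] [x'|s'] //= Vx Vy Exy.
  + by split=> //; split; [apply: hpR|apply: hpe].
  + by split; [apply: hpR|split=> //; apply: hpe].
have Hv : forall x, vert G x -> exists u, L u /\ reach G x (inl u) /\ reach G (inl u) x.
  move=> [u|t] /= Vx; first by exists u; split=> //; split; apply: reach_refl.
  case: (hRe Vx) => u Eu; exists u; split; first by case: (hLR Eu).
  by split; apply: reach_step => //=; case: (hLR Eu).
move=> x y Vx Vy.
case: (Hv x Vx) => u [Lu [Hxu _]]; case: (Hv y Vy) => u' [Lu' [_ Huy]].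
by apply: reach_trans Hxu (reach_trans (Hl u u' Lu Lu') Huy).
Qed.

Lemma B_bridge : bridgey G' -> (forall t, R t -> conn (Hf t)) -> bridgey G.
Proof.
move=> BG HC; apply: bridgey_half => a r Ear Hr.
have Nar : inl a <> inr r :> (U + T) by [].
case: (last_step Hr Nar) => -[x|t] [Vz [Vr [Ez Hz]]]; last by case: Ez => [[]].
case: Ez => Exr [Nxa _].
have Nxa' : x <> a by move=> E; apply: Nxa; rewrite E.
have H1 : reach (restrict G (PL (fun t => t <> r))) (inl a) (inl x).
  apply: reach_mono Hz => [[u|t] [u'|t']] //= [Vu Nu] [Vu' Nu'] [Ee _];
    repeat split => //; move=> E; subst; finneg.
have := lift HC (hLR Ear).1 H1 => /= H2.
have H3 : reach (Hf r) (inl x) (inl a) by apply: HC.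
have Nxa2 : inl x <> inl a :> (U + T') by move=> [/Nxa'].
case: (last_step H3 Nxa2) => -[u|s] [Vs [_ [Es H4]]]; first by case: Es.
case: Vs => Rs Hps.
apply: (BG (inl a) (inr s) (hLR Ear).1 Rs Es).
apply: reach_trans (_ : reach _ _ (inl x)) _.
  apply: reach_mono H2 => [[u|t] [u'|t']] //= [Vu Nu] [Vu' Nu'] Ee;
    repeat split => //; finneg.
apply: reach_mono H4 => [[u|t] [u'|t']] //= [Vu Nu] [Vu' Nu'] Ee.
- repeat split => //; first [by case: Vu' | by case: (hLR Vu) | finneg].
- repeat split => //; first [by case: Vu | by case: (hLR Vu') | finneg].
Qed.
End Fiber.

Section Lang.
Variable A : Type.
Implicit Types (P Q : seq A -> Prop) (u v w s t : seq A).

Record glang P : Prop := GLang {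
  gl_l : forall u v, P (u ++ v) -> P u;
  gl_r : forall u v, P (u ++ v) -> P v;
  gl_extl : forall w n, P w -> exists u, size u = n /\ P (u ++ w);
  gl_extr : forall w n, P w -> exists v, size v = n /\ P (w ++ v) }.

Definition LextP P k w u := size u = k /\ P u /\ P (u ++ w).
Definition RextP P l w v := size v = l /\ P v /\ P (w ++ v).
Definition EPe P k l w u v := LextP P k w u /\ RextP P l w v /\ P (u ++ w ++ v).
Definition EP P k l w := mkG (LextP P k w) (RextP P l w) (EPe P k l w).

Section Step.
Variables (P : seq A -> Prop) (gP : glang P) (k l : nat) (w : seq A).

Lemma Ptake x s : P (x ++ s) -> P (x ++ take l s).
Proof. by rewrite -{1}(cat_take_drop l s) catA => /(gl_l gP). Qed.

Local Notation e := (EPe P k l w).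
Local Notation e' := (EPe P k l.+1 w).
Local Notation R' := (RextP P l.+1 w).
Local Notation pi := (@take A l).

Lemma s_hLR u t : e u t -> LextP P k w u /\ RextP P l w t.
Proof. by case=> [? [? _]]. Qed.
Lemma s_hLR' u t : e' u t -> LextP P k w u /\ R' t.
Proof. by case=> [? [? _]]. Qed.
Lemma s_hpR s : R' s -> RextP P l w (pi s).
Proof.
case=> [Hs [Ps Pws]]; split; first by rewrite size_take Hs ltnSn.
by split; [apply: (Ptake (x := [::])) | apply: Ptake].
Qed.
Lemma s_hpe u s : e' u s -> e u (pi s).
Proof.
case=> [Lu [Rs Puws]]; split=> //; split; first exact: s_hpR.
by rewrite catA; apply: Ptake; rewrite -catA.
Qed.
Lemma s_hlift u t : e u t -> exists s, pi s = t /\ e' u s.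
Proof.
case=> [Lu [[Ht [Pt Pwt]] Puwt]].
case: (gl_extr gP 1 Puwt) => b [Hb Pb].
exists (t ++ b); split; first by rewrite -Ht take_size_cat.
split=> //; split; last by rewrite -!catA in Pb.
split; first by rewrite size_cat Ht Hb addn1.
split.
  by move: Pb; rewrite -!catA catA => /(gl_r gP).
by move: Pb; rewrite -!catA => /(gl_r gP).
Qed.
Lemma s_hR'e s : R' s -> exists u, e' u s.
Proof.
case=> [Hs [Ps Pws]]; case: (gl_extl gP k Pws) => u [Hu Pu].
exists u; split; last by split.
split=> //; split; first exact: (gl_l gP Pu).
by move: Pu; rewrite catA => /(gl_l gP).
Qed.
Lemma s_hRe t : RextP P l w t -> exists u, e u t.
Proof.
case=> [Hs [Ps Pws]]; case: (gl_extl gP k Pws) => u [Hu Pu].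
exists u; split; last by split.
split=> //; split; first exact: (gl_l gP Pu).
by move: Pu; rewrite catA => /(gl_l gP).
Qed.

Lemma Hf_transfer t : RextP P l w t ->
  (conn (EP P k 1 (w ++ t)) -> conn (Hf e R' e' pi t)) /\
  (bridgey (EP P k 1 (w ++ t)) -> bridgey (Hf e R' e' pi t)).
Proof.
move=> Rt; case: (Rt) => [Ht [Pt Pwt]].
pose f := fun z : seq A + seq A => match z with inl u => inl u | inr b => inr (t ++ b) end.
pose g := fun z : seq A + seq A => match z with inl u => inl u | inr s => inr (drop l s) end.
have fV : forall x, vert (EP P k 1 (w ++ t)) x -> vert (Hf e R' e' pi t) (f x).
  move=> [u|b] /=.
    move=> [Hu [Pu Puwt]]; split; last by split.
    by split=> //; split=> //; move: Puwt; rewrite catA => /(gl_l gP).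
  move=> [Hb [Pb Pwtb]]; split; last by rewrite -Ht take_size_cat.
  split; first by rewrite size_cat Ht Hb addn1.
  by split; [move: Pwtb; rewrite -catA => /(gl_r gP) | rewrite catA].
have gV : forall y, vert (Hf e R' e' pi t) y -> vert (EP P k 1 (w ++ t)) (g y).
  move=> [u|s] /=.
    by move=> [[Hu [Pu Puw]] [_ Puwt]].
  move=> [[Hs [Ps Pws]] Hst]; 
  split; first by rewrite size_drop Hs subSnn.
  split; first by move: Ps; rewrite -{1}(cat_take_drop l s) => /(gl_r gP).
  by rewrite -catA -Hst cat_take_drop.
suff [C [B _]] : (conn (EP P k 1 (w ++ t)) -> conn (Hf e R' e' pi t)) /\
  (bridgey (EP P k 1 (w ++ t)) -> bridgey (Hf e R' e' pi t)) /\
  ((exists x, vert (EP P k 1 (w ++ t)) x) -> exists y, vert (Hf e R' e' pi t) y).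
  by split; [apply: C|apply: B].
apply: (iso_transfer (f := f) (g := g) fV gV).
- move=> [u|s] //= [[Hs _] Hst]; 
  by rewrite -Hst cat_take_drop.
- move=> [u|b] [u'|b'] //= Vx Vy [_ [_ Pe]].
  + have := fV (inr b') Vy => /= [[Rb _]].
    by split; [case: (fV (inl u) Vx)|split=> //; move: Pe; rewrite -!catA].
  + have := fV (inr b) Vx => /= [[Rb _]].
    by split; [case: (fV (inl u') Vy)|split=> //; move: Pe; rewrite -!catA].
- move=> [u|s] [u'|s'] //= Vx Vy [_ [_ Pe]].
  + have := gV (inr s') Vy => /= Rb; have := gV (inl u) Vx => /= Lu.
    split=> //; split=> //.
    case: Vy => _ Hst; 
    by rewrite -catA -Hst cat_take_drop.
  + have := gV (inr s) Vx => /= Rb; have := gV (inl u') Vy => /= Lu.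
    split=> //; split=> //.
    case: Vx => _ Hst; 
    by rewrite -catA -Hst cat_take_drop.
Qed.

Lemma conn_up_r : conn (EP P k l w) ->
  (forall t, RextP P l w t -> conn (EP P k 1 (w ++ t))) -> conn (EP P k l.+1 w).
Proof.
move=> C HC; apply: (A_conn (pi := pi) s_hLR' s_hlift s_hR'e C).
by move=> t Rt; apply: (Hf_transfer Rt).1; apply: HC.
Qed.

Lemma bridgey_up_r : bridgey (EP P k l w) ->
  (forall t, RextP P l w t -> bridgey (EP P k 1 (w ++ t))) -> bridgey (EP P k l.+1 w).
Proof.
move=> B HB; apply: (A_bridge (pi := pi) s_hLR s_hLR' s_hpe s_hpR B).
by move=> t Rt; apply: (Hf_transfer Rt).2; apply: HB.
Qed.

Lemma conn_down_r : conn (EP P k l.+1 w) -> conn (EP P k l w).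
Proof. exact: (B_conn (pi := pi) s_hLR s_hpe s_hpR s_hRe). Qed.

Lemma bridgey_down_r : bridgey (EP P k l.+1 w) ->
  (forall t, RextP P l w t -> conn (EP P k 1 (w ++ t))) -> bridgey (EP P k l w).
Proof.
move=> B HC; apply: (B_bridge (pi := pi) s_hLR s_hLR' s_hlift B).
by move=> t Rt; apply: (Hf_transfer Rt).1; apply: HC.
Qed.

End Step.
End Lang.

Section Rev.
Variable A : Type.
Implicit Types (P Q : seq A -> Prop).

Definition revP P := fun z : seq A => P (rev z).

Lemma glang_rev P : glang P -> glang (revP P).
Proof.
case=> gl gr el er; split; rewrite /revP.
- by move=> u v; rewrite rev_cat => /gr.
- by move=> u v; rewrite rev_cat => /gl.
- move=> w n /(er _ n) [v [Hv Pv]]; exists (rev v); split; first by rewrite size_rev.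
  by rewrite rev_cat revK.
- move=> w n /(el _ n) [u [Hu Pu]]; exists (rev u); split; first by rewrite size_rev.
  by rewrite rev_cat revK.
Qed.

Lemma rev_all P Q (HQ : forall z, Q z = P (rev z)) k l w :
  (conn (EP P k l w) -> conn (EP Q l k (rev w))) /\
  (bridgey (EP P k l w) -> bridgey (EP Q l k (rev w))) /\
  (tree' (EP P k l w) -> tree' (EP Q l k (rev w))).
Proof.
pose f := fun z : seq A + seq A => match z with inl u => inr (rev u) | inr v => inl (rev v) end.
have fV : forall x, vert (EP P k l w) x -> vert (EP Q l k (rev w)) (f x).
  move=> [u|v] /= [Hs [Pu Puw]]; (split; first by rewrite size_rev);
    by rewrite !HQ ?rev_cat !revK.
have gV : forall y, vert (EP Q l k (rev w)) y -> vert (EP P k l w) (f y).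
  move=> [u|v] /= [Hs [Pu Puw]]; (split; first by rewrite size_rev);
    by move: Pu Puw; rewrite !HQ ?rev_cat !revK.
have fg : forall y, vert (EP Q l k (rev w)) y -> f (f y) = y.
  by move=> [u|v] _ /=; rewrite revK.
have fE : forall x y, vert (EP P k l w) x -> vert (EP P k l w) y ->
    edge (EP P k l w) x y -> edge (EP Q l k (rev w)) (f x) (f y).
  move=> [u|v] [u'|v'] Vx Vy //= [_ [_ Pe]].
  + split; first exact: (fV (inr v') Vy).
    split; first exact: (fV (inl u) Vx).
    by rewrite HQ !rev_cat !revK -catA.
  + split; first exact: (fV (inr v) Vx).
    split; first exact: (fV (inl u') Vy).
    by rewrite HQ !rev_cat !revK -catA.
have gE : forall x y, vert (EP Q l k (rev w)) x -> vert (EP Q l k (rev w)) y ->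
    edge (EP Q l k (rev w)) x y -> edge (EP P k l w) (f x) (f y).
  move=> [u|v] [u'|v'] Vx Vy //= [_ [_ Pe]].
  + split; first exact: (gV (inr v') Vy).
    split; first exact: (gV (inl u) Vx).
    by move: Pe; rewrite HQ !rev_cat !revK -catA.
  + split; first exact: (gV (inr v) Vx).
    split; first exact: (gV (inl u') Vy).
    by move: Pe; rewrite HQ !rev_cat !revK -catA.
have [C [B N]] := iso_transfer fV gV fg fE gE.
split=> //; split=> //.
by case=> [Ne [Co Br]]; split; [apply: N|split; [apply: C|apply: B]].
Qed.

Lemma rev_all' P Q (HQ : forall z, Q z = P (rev z)) k l w :
  (conn (EP Q l k w) -> conn (EP P k l (rev w))) /\
  (bridgey (EP Q l k w) -> bridgey (EP P k l (rev w))) /\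
  (tree' (EP Q l k w) -> tree' (EP P k l (rev w))).
Proof. by apply: rev_all => z; rewrite HQ revK. Qed.

End Rev.

Section Levels.
Variables (A : Type) (m : nat).
Implicit Types (P Q : seq A -> Prop).

Definition Good P k l := forall w, P w -> m <= size w -> tree' (EP P k l w).
Definition CG P k l := forall w, P w -> m <= size w -> conn (EP P k l w).
Definition BG P k l := forall w, P w -> m <= size w -> bridgey (EP P k l w).

Lemma ne_EP P (gP : glang P) k l (w : seq A) : P w -> exists x, vert (EP P k l w) x.
Proof.
move=> Pw; case: (gl_extl gP k Pw) => u [Hu Pu].
by exists (inl u); split=> //; split=> //; apply: (gl_l gP Pu).
Qed.

Lemma size_ext (w t : seq A) : m <= size w -> m <= size (w ++ t).
Proof. by move=> H; rewrite size_cat; apply: leq_trans H (leq_addr _ _). Qed.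

Lemma good_up_r P (gP : glang P) k l : Good P k l -> Good P k 1 -> Good P k l.+1.
Proof.
move=> Gl G1 w Pw Hm; case: (Gl w Pw Hm) => _ [Co Br].
split; first exact: ne_EP.
split.
- apply: conn_up_r => // t [_ [_ Pwt]].
  by case: (G1 (w ++ t) Pwt (size_ext t Hm)) => _ [].
- apply: bridgey_up_r => // t [_ [_ Pwt]].
  by case: (G1 (w ++ t) Pwt (size_ext t Hm)) => _ [].
Qed.

Lemma good_rev P k l : Good P k l -> Good (revP P) l k.
Proof.
move=> G w Pw Hm; rewrite -(revK w).
apply: (rev_all (P := P) (Q := revP P) (fun z => erefl) k l (rev w)).2.2.
by apply: G => //; rewrite size_rev.
Qed.

Lemma good_unrev P k l : Good (revP P) l k -> Good P k l.
Proof.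
move=> G w Pw Hm; rewrite -(revK w).
apply: (rev_all' (P := P) (Q := revP P) (fun z => erefl) k l (rev w)).2.2.
by apply: G; rewrite /revP ?revK ?size_rev.
Qed.

Lemma cg_rev P k l : CG P k l -> CG (revP P) l k.
Proof.
move=> G w Pw Hm; rewrite -(revK w).
apply: (rev_all (P := P) (Q := revP P) (fun z => erefl) k l (rev w)).1.
by apply: G => //; rewrite size_rev.
Qed.

Lemma cg_unrev P k l : CG (revP P) l k -> CG P k l.
Proof.
move=> G w Pw Hm; rewrite -(revK w).
apply: (rev_all' (P := P) (Q := revP P) (fun z => erefl) k l (rev w)).1.
by apply: G; rewrite /revP ?revK ?size_rev.
Qed.

Lemma bg_rev P k l : BG P k l -> BG (revP P) l k.
Proof.
move=> G w Pw Hm; rewrite -(revK w).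
apply: (rev_all (P := P) (Q := revP P) (fun z => erefl) k l (rev w)).2.1.
by apply: G => //; rewrite size_rev.
Qed.

Lemma bg_unrev P k l : BG (revP P) l k -> BG P k l.
Proof.
move=> G w Pw Hm; rewrite -(revK w).
apply: (rev_all' (P := P) (Q := revP P) (fun z => erefl) k l (rev w)).2.1.
by apply: G; rewrite /revP ?revK ?size_rev.
Qed.

Lemma grow_all P (gP : glang P) : Good P 1 1 -> forall k l, Good P k.+1 l.+1.
Proof.
move=> G11.
have GR : forall l, Good P 1 l.+1.
  by elim=> [//|l IH]; apply: good_up_r.
elim=> [//|k IH] l.
apply: good_unrev; apply: good_up_r; first exact: glang_rev.
  exact: good_rev.
exact: good_rev.
Qed.

Lemma cg_down_r P (gP : glang P) k l : CG P k l.+1 -> CG P k l.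
Proof. by move=> C w Pw Hm; apply: conn_down_r => //; apply: C. Qed.

Lemma cg_down_l P (gP : glang P) k l : CG P k.+1 l -> CG P k l.
Proof.
move=> C; apply: cg_unrev; apply: cg_down_r; first exact: glang_rev.
exact: cg_rev.
Qed.

Lemma bg_down_r P (gP : glang P) k l : BG P k l.+1 -> CG P k 1 -> BG P k l.
Proof.
move=> B C w Pw Hm; apply: bridgey_down_r => //; first by apply: B.
by move=> t [_ [_ Pwt]]; apply: C => //; apply: size_ext.
Qed.

Lemma bg_down_l P (gP : glang P) k l : BG P k.+1 l -> CG P 1 l -> BG P k l.
Proof.
move=> B C; apply: bg_unrev; apply: bg_down_r; first exact: glang_rev.
  exact: bg_rev.
exact: cg_rev.
Qed.

Lemma iter_down (F : nat -> Prop) : (forall j, F j.+1 -> F j) ->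
  forall d j, F (j + d) -> F j.
Proof. by move=> H; elim=> [|d IH] j; rewrite ?addn0 // addnS => /H /IH. Qed.

Lemma shrink_all P (gP : glang P) n : Good P n.+1 n.+1 -> Good P 1 1.
Proof.
move=> G.
have C : CG P n.+1 n.+1 by move=> w Pw Hm; case: (G w Pw Hm) => _ [].
have B : BG P n.+1 n.+1 by move=> w Pw Hm; case: (G w Pw Hm) => _ [].
have C1n : CG P 1 n.+1.
  apply: (@iter_down (fun j => CG P j n.+1) _ n 1); last by rewrite add1n.
  by move=> j; apply: cg_down_l.
have C11 : CG P 1 1.
  apply: (@iter_down (fun j => CG P 1 j) _ n 1); last by rewrite add1n.
  by move=> j; apply: cg_down_r.
have B1n : BG P 1 n.+1.
  apply: (@iter_down (fun j => BG P j n.+1) _ n 1); last by rewrite add1n.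
  by move=> j Bj; apply: bg_down_l.
have B11 : BG P 1 1.
  apply: (@iter_down (fun j => BG P 1 j) _ n 1); last by rewrite add1n.
  by move=> j Bj; apply: bg_down_r.
move=> w Pw Hm; split; first exact: ne_EP.
by split; [apply: C11|apply: B11].
Qed.

End Levels.

Section LangX.
Variables (A : finType) (X : config A -> Prop).

Lemma window_cat (x : config A) i a b :
  window x i (a + b) = window x i a ++ window x (i + a%:Z)%R b.
Proof.
rewrite /window /mkseq iotaD map_cat add0n; congr (_ ++ _).
rewrite -{1}(addn0 a) iotaDl -map_comp; apply: eq_map => j /=.
by rewrite PoszD GRing.addrA.
Qed.

Lemma cat_eq_split (u v u' v' : seq A) : size u = size u' -> u ++ v = u' ++ v' ->
  u = u' /\ v = v'.
Proof. by move=> Hs /eqP; rewrite eqseq_cat // => /andP [/eqP -> /eqP ->]. Qed.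

Lemma glang_X : glang (lang X).
Proof.
split.
- move=> u v [x [i [Xx H]]]; exists x, i; split=> //.
  move: H; rewrite size_cat window_cat => /cat_eq_split [] //.
  by rewrite size_mkseq.
- move=> u v [x [i [Xx H]]]; exists x, (i + (size u)%:Z)%R; split=> //.
  move: H; rewrite size_cat window_cat => /cat_eq_split [] //.
  by rewrite size_mkseq.
- move=> w n [x [i [Xx H]]]; exists (window x (i - n%:Z)%R n); split.
    by rewrite size_mkseq.
  exists x, (i - n%:Z)%R; split=> //.
  by rewrite size_cat size_mkseq window_cat GRing.subrK -H.
- move=> w n [x [i [Xx H]]]; exists (window x (i + (size w)%:Z)%R n); split.
    by rewrite size_mkseq.
  exists x, i; split=> //.
  by rewrite size_cat size_mkseq window_cat -H.
Qed.

Lemma ext_graph_EP n w : ext_graph X n w = EP (lang X) n n w.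
Proof. by []. Qed.

Lemma ed_good m : eventually_dendric X m <-> Good m (lang X) 1 1.
Proof.
split.
- move=> H w Lw Hm; apply/tree_equiv; [exact: mkG_sym|exact: mkG_irr|].
  exact: (H w (conj Lw Hm)).
- move=> H w [Lw Hm]; rewrite ext_graph_EP; apply/tree_equiv;
    [exact: mkG_sym|exact: mkG_irr|exact: H].
Qed.

End LangX.

Theorem mainTheorem17 (A : finType) (X : config A -> Prop) (m : nat) :
  shift_space X -> 1 <= m ->
  [<-> eventually_dendric X m;
       forall n, 1 <= n -> forall w, lang_ge X m w -> is_tree (ext_graph X n w);
       exists n, 1 <= n /\ forall w, lang_ge X m w -> is_tree (ext_graph X n w)].
Proof.
move=> _ _; tfae.
- move=> /ed_good G [|n] Hn w [Lw Hm]; first by [].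
  rewrite ext_graph_EP.
  apply/tree_equiv; [exact: mkG_sym|exact: mkG_irr|].
  exact: (grow_all (glang_X X) G n n Lw Hm).
- by move=> H; exists 1; split=> //; apply: H.
- case=> -[|n] [Hn H]; first by [].
  apply/ed_good.
  apply: (shrink_all (glang_X X) (n := n)) => w Lw Hm.
  apply/tree_equiv; [exact: mkG_sym|exact: mkG_irr|].
  exact: (H w (conj Lw Hm)).
Qed.
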